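(* For every integer $k\ge1$, $$t^+_k(2)=\tfrac16\left(2^k-(-1)^k\left(1+(-3)^{\lceil k/2\rceil}\right)\right),\qquad t^-_k(2)=\tfrac16\left(2^k-(-1)^k\left(1-(-3)^{\lceil k/2\rceil}\right)\right).$$
   Context: $T_\pm$ is a directed graph on three vertices $x_0,x_1,x_2$ (a triangle) with both arcs between each pair; the clockwise arcs $x_0\to x_1$, $x_1\to x_2$, $x_2\to x_0$ have sign $+$ and the reverse (counterclockwise) arcs have sign $-$. A walk is positive (negative) if the product of the signs of its arcs is $+$ ($-$). For vertices $x,y$ such that the clockwise path from $x$ to $y$ has length $2$ (i.e. $y\to x$ is a clockwise arc), $t^+_k(2)$ (resp. $t^-_k(2)$) is the number of positive (resp. negative) walks of length $k$ from $x$ to $y$. *)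

(* Defs.v *)
From mathcomp Require Import all_boot all_order all_algebra.
Set Implicit Arguments. Unset Strict Implicit. Unset Printing Implicit Defensive.
Import GRing.Theory Num.Theory.
Local Open Scope ring_scope.

(* The signed digraph T_pm on vertices x_0,x_1,x_2, represented as 'I_3.
   Clockwise successor of x_i is x_{i+1 mod 3} (ordS). *)

Definition Tarc (u v : 'I_3) : bool := u != v.

Definition Tsign (u v : 'I_3) : int := if v == ordS u then 1 else -1.

(* A walk of length k is given by its vertex sequence v_0,...,v_k
   (arcs are determined by their endpoints since there are no parallel arcs). *)
Definition is_walk (k : nat) (x y : 'I_3) (w : {ffun 'I_k.+1 -> 'I_3}) : bool :=
  [&& w ord0 == x, w ord_max == y &
      [forall i : 'I_k, Tarc (w (inord i)) (w (inord i.+1))]].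

Definition walk_sign (k : nat) (w : {ffun 'I_k.+1 -> 'I_3}) : int :=
  \prod_(i < k) Tsign (w (inord i)) (w (inord i.+1)).

Definition tplus (k : nat) (x y : 'I_3) : nat :=
  #|[set w : {ffun 'I_k.+1 -> 'I_3} | is_walk x y w && (walk_sign w == 1)]|.
Definition tminus (k : nat) (x y : 'I_3) : nat :=
  #|[set w : {ffun 'I_k.+1 -> 'I_3} | is_walk x y w && (walk_sign w == -1)]|.

(* Main.v *)
Require Import Defs.
From mathcomp Require Import all_boot all_order all_algebra.
From mathcomp Require Import ring.
Import GRing.Theory Num.Theory.
Local Open Scope ring_scope.

Section W.
Variable c : 'I_3 -> 'I_3 -> rat.

Definition F k (x y : 'I_3) : rat :=
  \sum_(w : {ffun 'I_k.+1 -> 'I_3})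
    (w ord0 == x)%:R * (w ord_max == y)%:R *
    \prod_(i < k) c (w (inord i)) (w (inord i.+1)).

Fixpoint Wr k (x y : 'I_3) : rat :=
  if k is k'.+1 then \sum_(z < 3) Wr k' x z * c z y else (x == y)%:R.

Definition ext k (p : {ffun 'I_k.+1 -> 'I_3} * 'I_3) : {ffun 'I_k.+2 -> 'I_3} :=
  [ffun i : 'I_k.+2 => if (i < k.+1)%N then p.1 (inord i) else p.2].
Definition cut k (w : {ffun 'I_k.+2 -> 'I_3}) : {ffun 'I_k.+1 -> 'I_3} * 'I_3 :=
  ([ffun j : 'I_k.+1 => w (inord j)], w ord_max).

Lemma ext_bij k : bijective (@ext k).
Proof.
exists (@cut k).
- case=> w z; rewrite /cut /ext /=; congr pair; last by rewrite ffunE ltnn.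
  apply/ffunP=> j; rewrite !ffunE.
  have hj : (j < k.+2)%N by apply: (leq_trans (ltn_ord j)).
  by rewrite inordK // ltn_ord; congr (w _); apply/val_inj; rewrite /= inordK.
- move=> w; apply/ffunP=> i; rewrite /cut /ext !ffunE /=.
  case: ifP => hi; first by congr (w _); apply/val_inj; rewrite /= !inordK // (leq_trans hi).
  congr (w _); apply/val_inj => /=; have := ltn_ord i; rewrite ltnS leq_eqVlt hi orbF => /eqP //.
Qed.

Lemma F0 x y : F 0 x y = (x == y)%:R.
Proof.
rewrite /F (reindex (fun z : 'I_3 => [ffun _ : 'I_1 => z])) /=; last first.
  exists (fun w : {ffun 'I_1 -> 'I_3} => w ord0) => [z _|w _]; first by rewrite ffunE.
  by apply/ffunP=> i; rewrite ffunE (ord1 i).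
rewrite (bigD1 x) //= !ffunE eqxx big_ord0 mulr1 mul1r.
rewrite big1 ?addr0 // => z hz; rewrite !ffunE.
by rewrite (negbTE hz) !mul0r.
Qed.

Lemma ext_lt k w z (i : nat) : (i < k.+1)%N -> ext k (w, z) (inord i) = w (inord i).
Proof. move=> hi; rewrite ffunE inordK ?hi //; exact: ltnW. Qed.

Lemma ext_max k w z : ext k (w, z) (inord k.+1) = z.
Proof. by rewrite ffunE inordK ?ltnn. Qed.

Lemma ext_term k w z x y :
  (ext k (w, z) ord0 == x)%:R * (ext k (w, z) ord_max == y)%:R *
    \prod_(i < k.+1) c (ext k (w, z) (inord i)) (ext k (w, z) (inord i.+1))
  = (w ord0 == x)%:R * (z == y)%:R *
    ((\prod_(i < k) c (w (inord i)) (w (inord i.+1))) * c (w ord_max) z).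
Proof.
have e0 : ext k (w, z) ord0 = w ord0.
  by rewrite ffunE /=; congr (w _); apply/val_inj; rewrite /= inordK.
have em : ext k (w, z) ord_max = z.
  by rewrite ffunE /= ltnn.
rewrite e0 em big_ord_recr ext_max.
rewrite (ext_lt k w z k (ltnSn k)).
rewrite (_ : inord k = ord_max); last by apply/val_inj; rewrite /= inordK.
congr (_ * (_ * _)); apply: eq_bigr => i _.
rewrite (ext_lt k w z i); last by rewrite ltnW // ltnS ltn_ord.
by rewrite (ext_lt k w z i.+1) // ltnS ltn_ord.
Qed.

Lemma FS k x y : F k.+1 x y = \sum_(z < 3) F k x z * c z y.
Proof.
rewrite /F (reindex (@ext k)); last by apply: onW_bij; apply: ext_bij.
have pb : forall H : {ffun 'I_k.+2 -> 'I_3} -> rat,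
  \sum_(p : {ffun 'I_k.+1 -> 'I_3} * 'I_3) H (ext k p) = \sum_w \sum_(z < 3) H (ext k (w, z)).
  by move=> H; rewrite pair_bigA; apply: eq_bigr => -[].
rewrite (pb (fun w => (w ord0 == x)%:R * (w ord_max == y)%:R * \prod_(i < k.+1) c (w (inord i)) (w (inord i.+1)))).
under eq_bigr => w _ do under eq_bigr => z _ do rewrite ext_term.
under [RHS]eq_bigr => z _ do rewrite big_distrl.
rewrite [RHS]exchange_big /=; apply: eq_bigr => w _.
rewrite [LHS](bigD1 y) // [RHS](bigD1 (w ord_max)) //= !eqxx.
rewrite [X in _ + X = _]big1 => [|z /negbTE hz]; last by rewrite hz !(mulr0, mul0r).
rewrite [X in _ = _ + X]big1 => [|z /negbTE hz]; last by rewrite (eq_sym (w ord_max)) hz !(mulr0, mul0r).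

by rewrite !addr0 !mulr1 mulrA.
Qed.
Lemma FW k x y : F k x y = Wr k x y.
Proof.
elim: k x y => [|k IH] x y; first by rewrite F0.
by rewrite FS /=; apply: eq_bigr => z _; rewrite IH.
Qed.
End W.
Definition cA (u v : 'I_3) : rat := (u != v)%:R.
Definition cS (u v : 'I_3) : rat := (u != v)%:R * (Tsign u v)%:~R.
Definition B2 (u v : 'I_3) : rat := if u == v then -2 else 1.

Lemma cS_sq x y : \sum_(z < 3) cS x z * cS z y = B2 x y.
Proof.
rewrite !big_ord_recr big_ord0 /=.
case: x => [[|[|[|?]]] ?] //; case: y => [[|[|[|?]]] ?] //;
rewrite /cS /B2 /Tsign /=; vm_compute; reflexivity.
Qed.

Lemma cS_B2 x y : \sum_(z < 3) B2 x z * cS z y = -3 * cS x y.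
Proof.
rewrite !big_ord_recr big_ord0 /=.
case: x => [[|[|[|?]]] ?] //; case: y => [[|[|[|?]]] ?] //;
rewrite /cS /B2 /Tsign /=; vm_compute; reflexivity.
Qed.

Lemma cA_E (a b : rat) x y : \sum_(z < 3) (if x == z then a else b) * cA z y = if x == y then 2 * b else a + b.
Proof.
rewrite !big_ord_recr big_ord0 /=.
case: x => [[|[|[|?]]] ?] //; case: y => [[|[|[|?]]] ?] //;
rewrite /cA /=; ring.
Qed.

Lemma sum_delta (f : 'I_3 -> rat) x : \sum_(z < 3) (x == z)%:R * f z = f x.
Proof.
rewrite (bigD1 x) //= eqxx mul1r big1 ?addr0 // => z hz.
by rewrite eq_sym (negbTE hz) mul0r.
Qed.

Lemma WA k x y : Wr cA k x y =
  if x == y then (2 ^+ k + 2 * (-1) ^+ k) / 3 else (2 ^+ k - (-1) ^+ k) / 3.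
Proof.
elim: k x y => [|k IH] x y.
  by rewrite /= expr0; case: (x == y) => /=; rewrite ?mulr1n ?mulr0n; field.
rewrite /=; under eq_bigr => z _ do rewrite IH.
rewrite cA_E; case: (x == y); rewrite !exprS; field. all: try done.
Qed.

Lemma WS k x y : Wr cS k.+1 x y = (-3) ^+ (k./2) * (if odd k then B2 x y else cS x y).
Proof.
elim: k x y => [|k IH] x y.
  by rewrite /= expr0 mul1r sum_delta.
rewrite (_ : Wr cS k.+2 x y = \sum_(z < 3) Wr cS k.+1 x z * cS z y) //; under eq_bigr => z _ do rewrite IH -mulrA.
rewrite -big_distrr /= uphalf_half.
case: (odd k) => /=.
  by rewrite cS_B2 mulrA -exprSr add1n.
by rewrite cS_sq add0n.
Qed.

Lemma card_sum (T : finType) (P : pred T) :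
  (#|[set w | P w]|)%:R = \sum_w (P w)%:R :> rat.
Proof.
rewrite cardsE -sum1_card natr_sum big_mkcond /=; apply: eq_bigr => w _.
by rewrite unfold_in; case: (P w).
Qed.

Lemma prod_bool n (b : 'I_n -> bool) :
  \prod_(i < n) (b i)%:R = ([forall i, b i])%:R :> rat.
Proof.
case: (boolP [forall i, b i]) => [/forallP h | /forallPn [i hi]].
  by rewrite big1 // => i _; rewrite h.
by rewrite (bigD1 i) //= (negbTE hi) mul0r.
Qed.

Lemma sign_pm k (w : {ffun 'I_k.+1 -> 'I_3}) :
  (walk_sign w == 1) || (walk_sign w == -1).
Proof.
rewrite /walk_sign; apply: (big_ind (fun s : int => (s == 1) || (s == -1))) => //.
  move=> a b /orP [] /eqP -> /orP [] /eqP ->; by rewrite ?mulr1 ?mulrN1 ?eqxx ?orbT.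
by move=> i _; rewrite /Tsign; case: ifP; rewrite eqxx ?orbT.
Qed.

Lemma walk_ind k x y (w : {ffun 'I_k.+1 -> 'I_3}) :
  (is_walk x y w)%:R = (w ord0 == x)%:R * (w ord_max == y)%:R *
     \prod_(i < k) cA (w (inord i)) (w (inord i.+1)).
Proof.
rewrite /is_walk /cA prod_bool.
by case: (w ord0 == x); case: (w ord_max == y); rewrite /= ?mul1r ?mul0r.
Qed.

Lemma walk_indS k x y (w : {ffun 'I_k.+1 -> 'I_3}) :
  (is_walk x y w)%:R * (walk_sign w)%:~R = (w ord0 == x)%:R * (w ord_max == y)%:R *
     \prod_(i < k) cS (w (inord i)) (w (inord i.+1)) :> rat.
Proof.
rewrite walk_ind /cS /cA big_split /= -!mulrA; congr (_ * (_ * (_ * _))).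
rewrite /walk_sign; elim/big_rec2: _ => // i a b _ <-; by rewrite intrM.
Qed.

Lemma sumA k x y : (tplus k x y)%:R + (tminus k x y)%:R = Wr cA k x y.
Proof.
rewrite -FW /F /tplus /tminus !card_sum -big_split /=; apply: eq_bigr => w _.
rewrite -walk_ind; case: (is_walk x y w) => //=.
by case/orP: (sign_pm _ w) => /eqP ->.
Qed.

Lemma difS k x y : (tplus k x y)%:R - (tminus k x y)%:R = Wr cS k x y.
Proof.
rewrite -FW /F /tplus /tminus !card_sum -sumrB /=; apply: eq_bigr => w _.
rewrite -walk_indS; case: (is_walk x y w) => /=; last by rewrite mul0r subrr.
by case/orP: (sign_pm _ w) => /eqP ->.
Qed.

Lemma xy_facts (x : 'I_3) : let y := ordS (ordS x) in
  [/\ (x == y) = false, cS x y = -1 & B2 x y = 1].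
Proof.
case: x => [[|[|[|?]]] ?] //=; split; by vm_compute.
Qed.

Theorem lemma13 (k : nat) (x y : 'I_3) :
  (1 <= k)%N -> y = ordS (ordS x) ->
  (tplus k x y)%:R = (1 / 6 : rat) * (2 ^+ k - (-1) ^+ k * (1 + (-3) ^+ uphalf k))
  /\
  (tminus k x y)%:R = (1 / 6 : rat) * (2 ^+ k - (-1) ^+ k * (1 - (-3) ^+ uphalf k)).
Proof.
case: k => [//|k] _ ->.
have [exy ecs eb2] := xy_facts x.
have hA := sumA k.+1 x (ordS (ordS x)).
have hS := difS k.+1 x (ordS (ordS x)).
rewrite WA exy in hA; rewrite WS ecs eb2 in hS.
set p := tplus _ _ _ in hA hS *; set m := tminus _ _ _ in hA hS *.
have ep : p%:R = ((p%:R + m%:R) + (p%:R - m%:R)) / 2 :> rat by field.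
have em : m%:R = ((p%:R + m%:R) - (p%:R - m%:R)) / 2 :> rat by field.
rewrite hA hS in ep em; rewrite ep em {ep em hA hS}.
rewrite (_ : uphalf k.+1 = (k./2).+1) //.
rewrite -[in (-1) ^+ k.+1](odd_double_half k) -[in (2:rat) ^+ k.+1](odd_double_half k).
case: (odd k) => /=; rewrite ?add0n ?add1n -?mul2n !exprS !exprM ?sqrrN ?expr1n.
  split; field. all: try done.
split; field. all: try done.
Qed.
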